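(* Let $J\ge1$ and $n\ge J^2$, and let $z_1,\dots,z_n\in\mathbb{R}$ be distinct. For $K\in\{1,\dots,J\}$ let $T_K=\{(\tau,\mu)\in\mathbb{R}^K\times\mathbb{R}^K:\tau_j>0,\ \sum_{j=1}^K\tau_j=1,\ \mu_1<\dots<\mu_K\}$. Let $(\tau,\mu)\in T_{K_1}$ and $(\varsigma,\nu)\in T_{K_2}$ with $K_1,K_2\le J$. If for every $i=1,\dots,n$ $$\frac{\sum_{k=1}^{K_1}\tau_k(z_i-\mu_k)\phi(z_i-\mu_k)}{\sum_{k=1}^{K_1}\tau_k\phi(z_i-\mu_k)}=\frac{\sum_{j=1}^{K_2}\varsigma_j(z_i-\nu_j)\phi(z_i-\nu_j)}{\sum_{j=1}^{K_2}\varsigma_j\phi(z_i-\nu_j)},$$ then $K_1=K_2$, $\tau=\varsigma$ and $\mu=\nu$.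
   Context: $\phi$ denotes the standard normal density. The displayed equality is equivalent to $\frac{\partial}{\partial z_i}\big[Q(\tau,\mu,z)-Q(\varsigma,\nu,z)\big]=0$, where $Q(\tau,\mu,z)=-\sum_{i=1}^n\log\sum_{k}\tau_k\phi(z_i-\mu_k)$. *)

(* Defs.v *)
From Stdlib Require Import Reals Lra Lia.
Open Scope R_scope.

Definition phi (x : R) : R := exp (- (x ^ 2) / 2) / sqrt (2 * PI).

Fixpoint rsum (K : nat) (f : nat -> R) : R :=
  match K with
  | O => 0
  | S k => rsum k f + f k
  end.

(* (tau, mu) in T_K ; vectors in R^K are represented by their
   coordinates at indices 0..K-1 *)
Definition InT (K : nat) (tau mu : nat -> R) : Prop :=
  (forall j, (j < K)%nat -> 0 < tau j) /\
  rsum K tau = 1 /\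
  (forall j, (S j < K)%nat -> mu j < mu (S j)).

Definition ratio (K : nat) (tau mu : nat -> R) (z : R) : R :=
  rsum K (fun k => tau k * (z - mu k) * phi (z - mu k)) /
  rsum K (fun k => tau k * phi (z - mu k)).

(* Main.v *)
Require Import Defs.
From Stdlib Require Import Reals Lra Lia.
From Coquelicot Require Import Coquelicot.
From Stdlib Require Import IndefiniteDescription.
Open Scope R_scope.

Lemma rsum_ext K f g : (forall k, (k < K)%nat -> f k = g k) -> rsum K f = rsum K g.
Proof. induction K; simpl; intros H; auto. rewrite IHK; [rewrite H|]; auto; intros; apply H; lia. Qed.

Lemma rsum_scal K c f : rsum K (fun k => c * f k) = c * rsum K f.
Proof. induction K; simpl; [ring|rewrite IHK; ring]. Qed.

Lemma rsum_plus K f g : rsum K (fun k => f k + g k) = rsum K f + rsum K g.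
Proof. induction K; simpl; [ring|rewrite IHK; ring]. Qed.

Lemma rsum_minus K f g : rsum K (fun k => f k - g k) = rsum K f - rsum K g.
Proof. induction K; simpl; [ring|rewrite IHK; ring]. Qed.

Lemma rsum_pos K f : (0 < K)%nat -> (forall k, (k < K)%nat -> 0 < f k) -> 0 < rsum K f.
Proof.
  induction K; simpl; intros H1 H2; [lia|].
  destruct K. simpl. assert (0 < f 0%nat) by (apply H2; lia); lra.
  assert (0 < rsum (S K) f) by (apply IHK; [lia|intros; apply H2; lia]).
  assert (0 < f (S K)) by (apply H2; lia); lra.
Qed.

Lemma rsum_mul K1 K2 f g : rsum K1 f * rsum K2 g = rsum K1 (fun k => rsum K2 (fun j => f k * g j)).
Proof.
  induction K1; simpl; [ring|]. rewrite <- IHK1. rewrite Rmult_plus_distr_r.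
  rewrite (rsum_scal K2 (f K1) g). ring.
Qed.

Lemma rsum_add a b f : rsum (a + b) f = rsum a f + rsum b (fun j => f (a + j)%nat).
Proof. induction b; simpl. rewrite Nat.add_0_r; ring. rewrite Nat.add_succ_r; simpl. rewrite IHb; ring. Qed.

Lemma rsum_flat K1 K2 F : rsum K1 (fun k => rsum K2 (fun j => F k j)) =
  rsum (K1 * K2) (fun p => F (p / K2)%nat (p mod K2)%nat).
Proof.
  induction K1; simpl; auto.
  rewrite Nat.add_comm, rsum_add, IHK1. f_equal. apply rsum_ext. intros j Hj.
  replace (K1 * K2 + j)%nat with (j + K1 * K2)%nat by lia.
  rewrite Nat.div_add by lia. rewrite Nat.Div0.mod_add by lia.
  rewrite Nat.div_small by lia. rewrite Nat.mod_small by lia. reflexivity.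
Qed.

Lemma deriv_es m a c z : is_derive (fun z => rsum m (fun p => a p * exp (c p * z))) z
   (rsum m (fun p => a p * c p * exp (c p * z))).
Proof.
  induction m; simpl.
  - auto_derive; auto.
  - apply (is_derive_plus (fun z => rsum m (fun p => a p * exp (c p * z)))
        (fun z => a m * exp (c m * z))). exact IHm.
    auto_derive; auto. ring.
Qed.

Lemma incr_lt (x : nat -> R) m : (forall i, (S i < m)%nat -> x i < x (S i)) ->
  forall i j, (i < j)%nat -> (j < m)%nat -> x i < x j.
Proof.
  intros H i j Hij. induction Hij; intros.
  - apply H; lia.
  - apply Rlt_trans with (x m0). apply IHHij; lia. apply H; lia.
Qed.

Lemma const_of_deriv0 (G : R -> R) : (forall z, is_derive G z 0) -> forall a b, G a = G b.
Proof.
  intros H a b. destruct (Rtotal_order a b) as [h|[h|h]].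
  - destruct (MVT_cor2 G (fun _ => 0) a b h) as [c [Hc _]].
    intros; apply is_derive_Reals; auto. lra.
  - subst; auto.
  - destruct (MVT_cor2 G (fun _ => 0) b a h) as [c [Hc _]].
    intros; apply is_derive_Reals; auto. lra.
Qed.

Lemma zeros_es : forall m a c (x : nat -> R),
  (forall i, (S i < m)%nat -> x i < x (S i)) ->
  (forall i, (i < m)%nat -> rsum m (fun p => a p * exp (c p * x i)) = 0) ->
  forall z, rsum m (fun p => a p * exp (c p * z)) = 0.
Proof.
  induction m; intros a c x Hx Hz z; simpl; auto.
  set (G := fun z => rsum m (fun p => a p * exp ((c p - c m) * z)) + a m).
  assert (HG : forall z, rsum m (fun p => a p * exp (c p * z)) + a m * exp (c m * z)
                 = exp (c m * z) * G z).
  { intros w. unfold G. rewrite Rmult_plus_distr_l, <- rsum_scal. f_equal; [|ring].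
    apply rsum_ext; intros. replace (c k * w) with (c m * w + (c k - c m) * w) by ring.
    rewrite exp_plus; ring. }
  assert (HGz : forall i, (i < S m)%nat -> G (x i) = 0).
  { intros i Hi. specialize (Hz i Hi). simpl in Hz. rewrite HG in Hz.
    apply Rmult_integral in Hz. destruct Hz as [h|h]; auto.
    pose proof (exp_pos (c m * x i)); lra. }
  assert (HdG : forall z, is_derive G z (rsum m (fun p => a p * (c p - c m) * exp ((c p - c m) * z)))).
  { intros w. unfold G.
    assert (H0 : is_derive (fun _ : R => a m) w 0) by (auto_derive; auto).
    pose proof (is_derive_plus _ _ w _ _ (deriv_es m (fun p => a p) (fun p => c p - c m) w) H0) as H1.
    assert (E : forall r : R, plus r 0 = r) by (intros; apply Rplus_0_r). rewrite E in H1.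
    eapply is_derive_ext; [|exact H1]. intros t; simpl. reflexivity. }
  assert (Hy : forall i, exists y, (i < m)%nat -> x i < y < x (S i) /\
     rsum m (fun p => a p * (c p - c m) * exp ((c p - c m) * y)) = 0).
  { intros i. destruct (Compare_dec.lt_dec i m) as [Hi|Hi]; [|exists 0; intros; lia].
    assert (Hlt : x i < x (S i)) by (apply Hx; lia).
    destruct (MVT_cor2 G (fun y => rsum m (fun p => a p * (c p - c m) * exp ((c p - c m) * y))) _ _ Hlt)
      as [y [Hy1 Hy2]].
    { intros; apply is_derive_Reals; apply HdG. }
    exists y; intros _; split; auto.
    rewrite !HGz in Hy1 by lia.
    assert (x (S i) - x i <> 0) by lra.
    apply (Rmult_eq_reg_r (x (S i) - x i)); lra. }
  destruct (functional_choice _ Hy) as [y Hy'].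
  assert (HG0 : forall w, rsum m (fun p => a p * (c p - c m) * exp ((c p - c m) * w)) = 0).
  { apply (IHm (fun p => a p * (c p - c m)) (fun p => c p - c m) y).
    - intros i Hi. destruct (Hy' i ltac:(lia)) as [[h1 h2] _].
      destruct (Hy' (S i) ltac:(lia)) as [[h3 h4] _]. lra.
    - intros i Hi. apply (Hy' i Hi). }
  assert (Gc : G z = G (x 0%nat)).
  { apply const_of_deriv0. intros w. rewrite <- (HG0 w). apply HdG. }
  rewrite HG, Gc, HGz by lia. ring.
Qed.
Lemma argmax n (z : nat -> R) : exists M, (M < S n)%nat /\ forall i, (i < S n)%nat -> z i <= z M.
Proof.
  induction n.
  - exists 0%nat; split; [lia|]. intros i Hi; replace i with 0%nat by lia; lra.
  - destruct IHn as [M [HM1 HM2]]. destruct (Rle_lt_dec (z (S n)) (z M)) as [h|h].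
    + exists M; split; [lia|]. intros i Hi. destruct (Nat.eq_dec i (S n)); [subst; auto|apply HM2; lia].
    + exists (S n); split; [lia|]. intros i Hi. destruct (Nat.eq_dec i (S n)); [subst; lra|].
      specialize (HM2 i ltac:(lia)); lra.
Qed.

Lemma sort_pts : forall n (P : R -> Prop) (z : nat -> R),
  (forall i j, (i < n)%nat -> (j < n)%nat -> i <> j -> z i <> z j) ->
  (forall i, (i < n)%nat -> P (z i)) ->
  exists x, (forall i, (S i < n)%nat -> x i < x (S i)) /\ (forall i, (i < n)%nat -> P (x i)).
Proof.
  induction n; intros P z Hinj HP.
  - exists z; split; intros; lia.
  - destruct (argmax n z) as [M [HM1 HM2]].
    set (idx := fun i => if (i <? M)%nat then i else S i).
    assert (Hidx : forall i, (i < n)%nat -> (idx i < S n)%nat /\ idx i <> M).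
    { intros i Hi; unfold idx; destruct (Nat.ltb_spec i M); lia. }
    assert (Hidxi : forall i j, idx i = idx j -> i = j).
    { intros i j; unfold idx; destruct (Nat.ltb_spec i M); destruct (Nat.ltb_spec j M); lia. }
    destruct (IHn (fun r => P r /\ r < z M) (fun i => z (idx i))) as [x' [Hx1 Hx2]].
    + intros i j Hi Hj Hij. destruct (Hidx i Hi), (Hidx j Hj).
      apply Hinj; auto.
    + intros i Hi. destruct (Hidx i Hi) as [h1 h2]. split; [apply HP; auto|].
      specialize (HM2 _ h1). assert (z (idx i) <> z M) by (apply Hinj; auto). lra.
    + exists (fun i => if (i <? n)%nat then x' i else z M). split.
      * intros i Hi. destruct (Nat.ltb_spec i n); destruct (Nat.ltb_spec (S i) n); try lia.
        -- apply Hx1; lia.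
        -- apply Hx2; auto.
      * intros i Hi. destruct (Nat.ltb_spec i n). apply Hx2; auto. apply HP; auto.
Qed.
Lemma lim_exp_neg c : c < 0 -> is_lim (fun z => exp (c * z)) p_infty 0.
Proof.
  intros Hc. apply (is_lim_comp exp (fun z => c * z) p_infty 0 m_infty).
  - apply is_lim_exp_m.
  - assert (E : Rbar_mult c p_infty = m_infty).
    { simpl. destruct (Rle_dec 0 c) as [h|h]. exfalso; lra. reflexivity. }
    rewrite <- E. apply is_lim_scal_l, is_lim_id.
  - exists 0; intros; discriminate.
Qed.

Lemma lim_es K a c : (forall k, (k < K)%nat -> c k < 0) ->
  is_lim (fun z => rsum K (fun k => a k * exp (c k * z))) p_infty 0.
Proof.
  induction K; intros Hc; simpl.
  - apply is_lim_const.
  - replace (Finite 0) with (Finite (0 + a K * 0)) by (f_equal; ring).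
    apply (is_lim_plus' (fun z => rsum K (fun k => a k * exp (c k * z))) (fun z => a K * exp (c K * z))).
    + apply IHK; intros; apply Hc; lia.
    + apply (is_lim_scal_l (fun z => exp (c K * z)) (a K) p_infty 0). apply lim_exp_neg, Hc; lia.
Qed.

Lemma top_coef K1 K2 a b c d al be :
  (forall k, (k < K1)%nat -> c k < 0) -> (forall k, (k < K2)%nat -> d k < 0) ->
  (forall z, rsum K1 (fun k => a k * exp (c k * z)) + al = rsum K2 (fun k => b k * exp (d k * z)) + be) ->
  al = be.
Proof.
  intros Hc Hd H.
  assert (L1 : is_lim (fun z => rsum K1 (fun k => a k * exp (c k * z)) + al) p_infty (0 + al)).
  { apply is_lim_plus'. apply lim_es; auto. apply is_lim_const. }
  assert (L2 : is_lim (fun z => rsum K2 (fun k => b k * exp (d k * z)) + be) p_infty (0 + be)).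
  { apply is_lim_plus'. apply lim_es; auto. apply is_lim_const. }
  apply (is_lim_ext _ _ _ _ (fun z => eq_sym (H z))) in L2.
  apply is_lim_unique in L1. apply is_lim_unique in L2. rewrite L1 in L2. injection L2. lra.
Qed.

Lemma shift K a c t z : rsum K (fun k => a k * exp ((c k - t) * z)) = exp (- t * z) * rsum K (fun k => a k * exp (c k * z)).
Proof.
  rewrite <- rsum_scal. apply rsum_ext; intros. replace ((c k - t) * z) with (- t * z + c k * z) by ring.
  rewrite exp_plus; ring.
Qed.

Lemma indep : forall K1 K2 A B mu nu,
  (forall k, (k < K1)%nat -> 0 < A k) -> (forall j, (j < K2)%nat -> 0 < B j) ->
  (forall i, (S i < K1)%nat -> mu i < mu (S i)) -> (forall i, (S i < K2)%nat -> nu i < nu (S i)) ->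
  (forall z, rsum K1 (fun k => A k * exp (mu k * z)) = rsum K2 (fun j => B j * exp (nu j * z))) ->
  K1 = K2 /\ forall k, (k < K1)%nat -> A k = B k /\ mu k = nu k.
Proof.
  induction K1; intros K2 A B mu nu HA HB Hmu Hnu H.
  - destruct K2; [split; auto; intros; lia|].
    specialize (H 0). simpl in H.
    assert (0 < rsum (S K2) (fun j => B j * exp (nu j * 0))).
    { apply rsum_pos; [lia|]. intros; apply Rmult_lt_0_compat; [apply HB; auto|apply exp_pos]. }
    simpl in H0. lra.
  - destruct K2.
    { specialize (H 0). simpl in H.
      assert (0 < rsum (S K1) (fun j => A j * exp (mu j * 0))).
      { apply rsum_pos; [lia|]. intros; apply Rmult_lt_0_compat; [apply HA; auto|apply exp_pos]. }
      simpl in H0. lra. }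
    assert (Hm : forall k, (k < K1)%nat -> mu k < mu K1) by (intros; apply (incr_lt mu (S K1)); auto).
    assert (Hn : forall k, (k < K2)%nat -> nu k < nu K2) by (intros; apply (incr_lt nu (S K2)); auto).
    assert (HAt : 0 < A K1) by (apply HA; lia).
    assert (HBt : 0 < B K2) by (apply HB; lia).
    assert (HS : forall t z, rsum K1 (fun k => A k * exp ((mu k - t) * z)) + A K1 * exp ((mu K1 - t) * z)
                 = rsum K2 (fun k => B k * exp ((nu k - t) * z)) + B K2 * exp ((nu K2 - t) * z)).
    { intros t z. rewrite !shift. specialize (H z). simpl in H.
      replace ((mu K1 - t) * z) with (- t * z + mu K1 * z) by ring.
      replace ((nu K2 - t) * z) with (- t * z + nu K2 * z) by ring.
      rewrite !exp_plus. transitivity (exp (- t * z) * (rsum K1 (fun k => A k * exp (mu k * z)) + A K1 * exp (mu K1 * z))); [ring|].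
      rewrite H. ring. }
    destruct (Rtotal_order (mu K1) (nu K2)) as [h|[h|h]].
    + exfalso. assert (0 = B K2); [|lra].
      apply (top_coef (S K1) K2 A B (fun k => mu k - nu K2) (fun k => nu k - nu K2)).
      * intros k Hk. destruct (Nat.eq_dec k K1); [subst; lra|]. specialize (Hm k ltac:(lia)); lra.
      * intros k Hk. specialize (Hn k Hk); lra.
      * intros z. simpl. rewrite HS. rewrite Rminus_diag, Rmult_0_l, exp_0. ring.
    + assert (A K1 = B K2).
      { apply (top_coef K1 K2 A B (fun k => mu k - mu K1) (fun k => nu k - mu K1)).
        * intros k Hk. specialize (Hm k Hk); lra.
        * intros k Hk. specialize (Hn k Hk); lra.
        * intros z. pose proof (HS (mu K1) z) as E. rewrite h in E at 3.
          rewrite Rminus_diag, Rmult_0_l, exp_0 in E. rewrite <- h in E. rewrite Rminus_diag, Rmult_0_l, exp_0 in E. lra. }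
      destruct (IHK1 K2 A B mu nu) as [E1 E2].
      * intros; apply HA; lia.
      * intros; apply HB; lia.
      * intros; apply Hmu; lia.
      * intros; apply Hnu; lia.
      * intros z. specialize (H z). simpl in H. rewrite H0, h in H. lra.
      * subst K2. split; auto. intros k Hk. destruct (Nat.eq_dec k K1); [subst; auto|apply E2; lia].
    + exfalso. assert (A K1 = 0); [|lra].
      apply (top_coef K1 (S K2) A B (fun k => mu k - mu K1) (fun k => nu k - mu K1)).
      * intros k Hk. specialize (Hm k Hk); lra.
      * intros k Hk. destruct (Nat.eq_dec k K2); [subst; lra|]. specialize (Hn k ltac:(lia)); lra.
      * intros z. simpl. rewrite <- HS. rewrite Rminus_diag, Rmult_0_l, exp_0. ring.
Qed.

Definition Aco (tau mu : nat -> R) k := tau k * exp (- (mu k ^ 2) / 2).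
Definition hh K tau mu z := rsum K (fun k => Aco tau mu k * exp (mu k * z)).
Definition hd K tau mu z := rsum K (fun k => Aco tau mu k * mu k * exp (mu k * z)).

Lemma phi_split z m : phi (z - m) = exp (- (z ^ 2) / 2) / sqrt (2 * PI) * (exp (- (m ^ 2) / 2) * exp (m * z)).
Proof.
  unfold phi. rewrite <- exp_plus. replace (- ((z - m) ^ 2) / 2) with (- (z ^ 2) / 2 + (- (m ^ 2) / 2 + m * z)) by field.
  rewrite exp_plus. unfold Rdiv. ring.
Qed.

Lemma hh_pos K tau mu z : (1 <= K)%nat -> (forall j, (j < K)%nat -> 0 < tau j) -> 0 < hh K tau mu z.
Proof.
  intros H1 H2. apply rsum_pos; [lia|]. intros k Hk. unfold Aco.
  pose proof (H2 k Hk). pose proof (exp_pos (- (mu k ^ 2) / 2)). pose proof (exp_pos (mu k * z)).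
  apply Rmult_lt_0_compat; auto. apply Rmult_lt_0_compat; auto.
Qed.

Lemma ratio_eq K tau mu z : 0 < hh K tau mu z -> ratio K tau mu z = z - hd K tau mu z / hh K tau mu z.
Proof.
  intros Hp. unfold ratio.
  set (q := exp (- (z ^ 2) / 2) / sqrt (2 * PI)).
  assert (Hq : 0 < q).
  { unfold q. apply Rdiv_lt_0_compat. apply exp_pos. apply sqrt_lt_R0. pose proof PI_RGT_0; lra. }
  assert (E1 : rsum K (fun k => tau k * phi (z - mu k)) = q * hh K tau mu z).
  { unfold hh. rewrite <- rsum_scal. apply rsum_ext; intros. rewrite phi_split. unfold Aco. fold q. ring. }
  assert (E2 : rsum K (fun k => tau k * (z - mu k) * phi (z - mu k)) = q * (z * hh K tau mu z - hd K tau mu z)).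
  { unfold hh, hd. rewrite <- rsum_scal, <- rsum_minus. rewrite <- rsum_scal. apply rsum_ext; intros.
    rewrite phi_split. unfold Aco. fold q. ring. }
  rewrite E1, E2. field. lra.
Qed.

Lemma E_form K1 K2 tau mu vs nu z :
  hd K1 tau mu z * hh K2 vs nu z - hh K1 tau mu z * hd K2 vs nu z =
  rsum (K1 * K2) (fun p => (Aco tau mu (p / K2)%nat * Aco vs nu (p mod K2)%nat *
        (mu (p / K2)%nat - nu (p mod K2)%nat)) * exp ((mu (p / K2)%nat + nu (p mod K2)%nat) * z)).
Proof.
  unfold hd, hh. rewrite !rsum_mul, <- rsum_minus.
  transitivity (rsum K1 (fun k => rsum K2 (fun j => (fun k j => (Aco tau mu k * Aco vs nu j * (mu k - nu j)) * exp ((mu k + nu j) * z)) k j))).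
  2: apply rsum_flat. apply rsum_ext; intros k Hk. rewrite <- rsum_minus. apply rsum_ext; intros j Hj.
  rewrite Rmult_plus_distr_r, exp_plus. ring.
Qed.

Theorem mainTheorem7 :
  forall (J n : nat) (z : nat -> R) (K1 K2 : nat) (tau mu vs nu : nat -> R),
    (1 <= J)%nat ->
    (J * J <= n)%nat ->
    (forall i j, (i < n)%nat -> (j < n)%nat -> i <> j -> z i <> z j) ->
    (1 <= K1 <= J)%nat ->
    (1 <= K2 <= J)%nat ->
    InT K1 tau mu ->
    InT K2 vs nu ->
    (forall i, (i < n)%nat -> ratio K1 tau mu (z i) = ratio K2 vs nu (z i)) ->
    K1 = K2 /\ (forall k, (k < K1)%nat -> tau k = vs k /\ mu k = nu k).
Proof.
  intros J n z K1 K2 tau mu vs nu HJ Hn Hz HK1 HK2 [Ht1 [Ht2 Ht3]] [Hv1 [Hv2 Hv3]] Hr.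
  set (E := fun w => hd K1 tau mu w * hh K2 vs nu w - hh K1 tau mu w * hd K2 vs nu w).
  assert (P1 : forall w, 0 < hh K1 tau mu w) by (intros; apply hh_pos; auto; lia).
  assert (P2 : forall w, 0 < hh K2 vs nu w) by (intros; apply hh_pos; auto; lia).
  assert (Ez : forall i, (i < n)%nat -> E (z i) = 0).
  { intros i Hi. specialize (Hr i Hi). rewrite !ratio_eq in Hr by auto. unfold E.
    specialize (P1 (z i)); specialize (P2 (z i)).
    assert (hd K1 tau mu (z i) / hh K1 tau mu (z i) = hd K2 vs nu (z i) / hh K2 vs nu (z i)) as H' by lra.
    replace (hd K1 tau mu (z i) * hh K2 vs nu (z i) - hh K1 tau mu (z i) * hd K2 vs nu (z i))
      with ((hd K1 tau mu (z i) / hh K1 tau mu (z i) - hd K2 vs nu (z i) / hh K2 vs nu (z i)) * (hh K1 tau mu (z i) * hh K2 vs nu (z i))) by (field; lra).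
    rewrite H'. ring. }
  destruct (sort_pts n (fun r => E r = 0) z Hz Ez) as [x [Hx1 Hx2]].
  assert (Hm : (K1 * K2 <= n)%nat) by (pose proof (Nat.mul_le_mono K1 J K2 J); lia).
  assert (E0 : forall w, E w = 0).
  { intros w. unfold E. rewrite E_form.
    apply (zeros_es (K1 * K2) _ _ x).
    - intros; apply Hx1; lia.
    - intros i Hi. rewrite <- E_form. apply (Hx2 i). lia. }
  assert (HC : forall w, hh K1 tau mu w / hh K2 vs nu w = hh K1 tau mu 0 / hh K2 vs nu 0).
  { intros w. apply (const_of_deriv0 (fun t => hh K1 tau mu t / hh K2 vs nu t)). intros t.
    replace 0 with ((hd K1 tau mu t * hh K2 vs nu t - hh K1 tau mu t * hd K2 vs nu t) / hh K2 vs nu t ^ 2).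
    apply is_derive_div; [apply deriv_es|apply deriv_es|specialize (P2 t); lra].
    fold (E t). rewrite E0. specialize (P2 t). field. lra. }
  set (C := hh K1 tau mu 0 / hh K2 vs nu 0) in HC.
  assert (HCp : 0 < C) by (unfold C; apply Rdiv_lt_0_compat; auto).
  destruct (indep K1 K2 (Aco tau mu) (fun k => C * Aco vs nu k) mu nu) as [EK Ek].
  - intros k Hk. unfold Aco. pose proof (Ht1 k Hk). pose proof (exp_pos (- (mu k ^ 2) / 2)).
    apply Rmult_lt_0_compat; auto.
  - intros k Hk. unfold Aco. pose proof (Hv1 k Hk). pose proof (exp_pos (- (nu k ^ 2) / 2)).
    apply Rmult_lt_0_compat; auto. apply Rmult_lt_0_compat; auto.
  - auto.
  - auto.
  - intros w. specialize (HC w). specialize (P2 w).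
    transitivity (C * hh K2 vs nu w).
    + fold (hh K1 tau mu w). rewrite <- HC. field. lra.
    + unfold hh. rewrite <- rsum_scal. apply rsum_ext; intros; ring.
  - subst K2.
    assert (Htv : forall k, (k < K1)%nat -> tau k = C * vs k).
    { intros k Hk. destruct (Ek k Hk) as [Ea Em]. unfold Aco in Ea. rewrite Em in Ea.
      pose proof (exp_pos (- (nu k ^ 2) / 2)).
      apply (Rmult_eq_reg_r (exp (- (nu k ^ 2) / 2))); [|lra]. rewrite Ea. ring. }
    assert (C = 1).
    { rewrite <- Ht2. rewrite (rsum_ext K1 tau (fun k => C * vs k) Htv), rsum_scal, Hv2. ring. }
    split; auto. intros k Hk. split; [rewrite Htv by auto; rewrite H; ring|apply Ek; auto].
Qed.
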